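(* For a coloured integer $k_x$, let $G_{k_x}(a,b,q)=\sum a^{u}b^{v}q^{n}$, the sum running over all admissible coloured partitions (including the empty one) whose largest part $\lambda_1$ satisfies $\lambda_1\le k_x$ in the total order of coloured integers, where $n,u,v$ are the size and the two weights of the partition. Writing $G_{k_x}$ for $G_{k_x}(a,b,q)$, for all integers $k\ge 1$ the following identities of formal power series hold: \begin{align*} G_{(2k+1)_{ab}}&=G_{(2k)_{b}}+abq^{2k+1} G_{(2k-1)_{a}},\\ G_{(2k+1)_a}&=G_{(2k+1)_{ab}}+aq^{2k+1} G_{(2k)_{ab}},\\ G_{(2k+1)_{b^2}}&=G_{(2k+1)_{a}}+b^2q^{2k+1}G_{(2k-1)_{a}},\\ G_{(2k+1)_{b}}&=G_{(2k+1)_{b^2}}+bq^{2k+1}G_{(2k)_{a}},\\ G_{(2k+2)_{ab}}&= G_{(2k+1)_{b}}+abq^{2k+2}G_{(2k)_{a}}+ab^2q^{4k+2}G_{(2k-1)_{a}},\\ G_{(2k+2)_{a}}&= G_{(2k+2)_{ab}}+ aq^{2k+2} G_{(2k)_{a}}+ abq^{4k+2}G_{(2k-1)_{a}},\\ G_{(2k+3)_{a^2}}&=G_{(2k+2)_{a}}+a^2q^{2k+3}G_{(2k)_{a}}+a^2bq^{4k+3}G_{(2k-1)_{a}},\\ G_{(2k+2)_{b}}&=G_{(2k+3)_{a^2}}+bq^{2k+2}G_{(2k+1)_{a}}. \end{align*}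
   Context: Coloured integers: every positive integer $k$ occurs in the three colours $a$, $b$, $ab$ (written $k_a$, $k_b$, $k_{ab}$). In addition, odd positive integers occur in the colours $a^2$ and $b^2$: $k_{b^2}$ for every odd $k\ge 1$ and $k_{a^2}$ for every odd $k \geq 3$. The integer value of $k_x$ is $k$ and its colour is $x$. These coloured integers are totally ordered by $$1_{ab} < 1_a < 1_{b^2} <1_{b} <2_{ab} < 2_a <3_{a^2} < 2_{b} <3_{ab} < 3_a < 3_{b^2} <3_b <4_{ab}<4_a<5_{a^2}<4_b<5_{ab}<\cdots,$$ that is, for every odd $m\ge1$: $m_{ab}<m_a<m_{b^2}<m_b<(m+1)_{ab}<(m+1)_a<(m+2)_{a^2}<(m+1)_b<(m+2)_{ab}$. Difference conditions: for a coloured integer $\lambda$ (the ''upper'' part) of colour $x$ and a coloured integer $\mu$ (the ''lower'' part) of colour $y$, a minimal difference $A(\lambda,\mu)$ is defined as follows, where the row is determined by the colour and the parity of the integer value of $\lambda$, and the entries are listed for $y = a, b, ab, a^2, b^2$ in this order: - $\lambda$ of colour $a$, odd: $2,2,1,2,2$; - $\lambda$ of colour $b^2$: $2,3,2,2,4$; - $\lambda$ of colour $b$, odd: $1,2,1,2,2$; - $\lambda$ of colour $ab$, even: $2,2,2,3,3$; - $\lambda$ of colour $a$, even: $2,2,2,3,3$; - $\lambda$ of colour $a^2$: $3,3,3,4,4$; - $\lambda$ of colour $b$, even: $1,2,1,1,3$; - $\lambda$ of colour $ab$, odd: $2,3,2,2,3$. An admissible coloured partition is a finite (possibly empty) sequence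 $\lambda_1,\dots,\lambda_s$ of coloured integers, none of which equals $1_{ab}$ or $1_{b^2}$, such that for every $1\le i<s$ the integer values satisfy $\lambda_i-\lambda_{i+1}\ge A(\lambda_i,\lambda_{i+1})$. Its size $n$ is the sum of the integer values of its parts. Its weight $u$ is the number of parts of colour $a$ or $ab$ plus twice the number of parts of colour $a^2$; its weight $v$ is the number of parts of colour $b$ or $ab$ plus twice the number of parts of colour $b^2$. *)

(* Defs.v *)
From mathcomp Require Import all_boot.
Set Implicit Arguments. Unset Strict Implicit. Unset Printing Implicit Defensive.

Inductive colour := Ca | Cb | Cab | Ca2 | Cb2.

Definition colours : seq colour := [:: Ca; Cb; Cab; Ca2; Cb2].

Definition cint := (nat * colour)%type.

Definition valid_cint (c : cint) : bool :=
  let: (k, x) := c in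
  match x with
  | Ca | Cb | Cab => 0 < k
  | Cb2 => odd k
  | Ca2 => odd k && (3 <= k)
  end.

(** Position in the total order
    1_ab < 1_a < 1_b2 < 1_b < 2_ab < 2_a < 3_a2 < 2_b < 3_ab < ...
    (meaningful on valid coloured integers only). *)
Definition crank (c : cint) : nat :=
  let: (k, x) := c in
  let j := k./2 in
  if odd k then
    match x with
    | Cab => 8 * j | Ca => 8 * j + 1 | Cb2 => 8 * j + 2 | Cb => 8 * j + 3
    | Ca2 => 8 * j - 2
    end
  else
    match x with
    | Cab => 8 * j - 4 | Ca => 8 * j - 3 | Cb => 8 * j - 1
    | _ => 0
    end.

Definition cle (c d : cint) : bool := crank c <= crank d.

Definition pick5 (y : colour) (ea eb eab ea2 eb2 : nat) : nat :=
  match y with Ca => ea | Cb => eb | Cab => eab | Ca2 => ea2 | Cb2 => eb2 end.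

Definition Adiff (l m : cint) : nat :=
  let: (k, x) := l in
  let y := m.2 in
  match x, odd k with
  | Ca, true   => pick5 y 2 2 1 2 2
  | Cb2, _     => pick5 y 2 3 2 2 4
  | Cb, true   => pick5 y 1 2 1 2 2
  | Cab, false => pick5 y 2 2 2 3 3
  | Ca, false  => pick5 y 2 2 2 3 3
  | Ca2, _     => pick5 y 3 3 3 4 4
  | Cb, false  => pick5 y 1 2 1 1 3
  | Cab, true  => pick5 y 2 3 2 2 3
  end.

Definition is_1ab (c : cint) : bool :=
  match c with (1, Cab) => true | _ => false end.
Definition is_1b2 (c : cint) : bool :=
  match c with (1, Cb2) => true | _ => false end.

Fixpoint diff_ok (p : seq cint) : bool :=
  match p with
  | l :: ((m :: _) as p') => (m.1 + Adiff l m <= l.1) && diff_ok p'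
  | _ => true
  end.

Definition admissible (p : seq cint) : bool :=
  all valid_cint p && all (fun c => ~~ is_1ab c && ~~ is_1b2 c) p && diff_ok p.

Definition psize (p : seq cint) : nat := sumn (map fst p).

Definition wt_u (c : cint) : nat :=
  match c.2 with Ca | Cab => 1 | Ca2 => 2 | _ => 0 end.
Definition wt_v (c : cint) : nat :=
  match c.2 with Cb | Cab => 1 | Cb2 => 2 | _ => 0 end.
Definition pweight_u (p : seq cint) : nat := sumn (map wt_u p).
Definition pweight_v (p : seq cint) : nat := sumn (map wt_v p).

(** The largest (= first) part is <= kx in the coloured order; empty partition allowed. *)
Definition first_le (p : seq cint) (kx : cint) : bool :=
  if p is l :: _ then cle l kx else true.

(** Finite candidate list: every sequence of length <= n whose entries are
    coloured-integer pairs (j, x) with 1 <= j <= n.  Every partition of size n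
    occurs exactly once here. *)
Definition alphabet (n : nat) : seq cint :=
  [seq (j, x) | j <- iota 1 n, x <- colours].

Fixpoint words (A : seq cint) (m : nat) : seq (seq cint) :=
  if m is m'.+1 then [seq x :: w | x <- A, w <- words A m'] else [:: [::]].

Definition cands (n : nat) : seq (seq cint) :=
  flatten [seq words (alphabet n) m | m <- iota 0 n.+1].

(** Formal power series in a, b, q with nat coefficients:
    F u v n = coefficient of a^u b^v q^n. *)
Definition fps := nat -> nat -> nat -> nat.

Definition fps_add (F G : fps) : fps := fun u v n => F u v n + G u v n.

(** Multiplication by the monomial a^i b^j q^l. *)
Definition fps_mon (i j l : nat) (F : fps) : fps :=
  fun u v n => if [&& i <= u, j <= v & l <= n] then F (u - i) (v - j) (n - l) else 0.

Definition Gser (kx : cint) : fps :=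
  fun u v n =>
    count (fun p => [&& admissible p, psize p == n, pweight_u p == u,
                        pweight_v p == v & first_le p kx]) (cands n).

(* Main.v *)
Require Import Defs.
From mathcomp Require Import all_boot zify.
From Stdlib Require Import FunctionalExtensionality.
From HB Require Import structures.

Definition colour_eqb (x y : colour) : bool :=
  match x, y with
  | Ca, Ca | Cb, Cb | Cab, Cab | Ca2, Ca2 | Cb2, Cb2 => true
  | _, _ => false end.
Lemma colour_eqP : Equality.axiom colour_eqb.
Proof. by case; case; constructor. Qed.
HB.instance Definition _ := hasDecEq.Build colour colour_eqP.

Lemma count_uniq_eq (T : eqType) (P : pred T) (s1 s2 : seq T) :
  uniq s1 -> uniq s2 -> (forall x, P x -> (x \in s1) = (x \in s2)) ->
  count P s1 = count P s2.
Proof.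
move=> u1 u2 H; rewrite -!size_filter; apply: perm_size.
apply: uniq_perm; rewrite ?filter_uniq // => x; rewrite !mem_filter.
by case Px: (P x) => //=; apply: H.
Qed.

Lemma words_uniq (A : seq cint) m : uniq A -> uniq (words A m).
Proof.
move=> uA; elim: m => [|m IH] //=.
apply: allpairs_uniq => // [[x w]] [y w'] _ _ /=; by case=> -> ->.
Qed.

Lemma words_size (A : seq cint) m w : w \in words A m -> size w = m.
Proof.
elim: m w => [|m IH] w /=; first by rewrite inE => /eqP ->.
by case/allpairsP => [[x w']] [_ /= /IH <- ->].
Qed.

Lemma words_mem (A : seq cint) w : all (mem A) w -> w \in words A (size w).
Proof.
elim: w => [|x w IH] //= /andP [xA wA].
by apply: (allpairs_f (fun x w => x :: w)) => //; apply: IH.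
Qed.

Lemma alphabet_uniq n : uniq (alphabet n).
Proof.
apply: allpairs_uniq; rewrite ?iota_uniq //.
by move=> [j x] [j' x'] _ _ /= [-> ->].
Qed.


Lemma cands_uniq n : uniq (cands n).
Proof.
rewrite /cands; elim: (iota 0 n.+1) (iota_uniq 0 n.+1) => [|m s IH] //= /andP [ms us].
rewrite cat_uniq words_uniq ?alphabet_uniq ?IH //= andbT.
apply/hasPn => w /flatten_mapP [m' m's] /words_size wm.
apply/negP => /words_size; rewrite wm => E; by move: ms; rewrite -E m's.
Qed.

Lemma in_cands p n : all (fun c => 0 < c.1) p -> psize p = n -> p \in cands n.
Proof.
move=> Hp Hs; rewrite /cands; apply/flatten_mapP; exists (size p).
  rewrite mem_iota /= ltnS -Hs /psize.
  elim: p Hp {Hs} => [|c p IH] //= /andP [c0 /IH]; lia.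
apply: words_mem; apply/allP => c cp.
have c0 := allP Hp c cp.
have cn : c.1 <= n.
  rewrite -Hs /psize; elim: p cp {Hp Hs} => [|d p IH] //=; rewrite inE.
  case/orP => [/eqP -> | /IH]; first lia. by move/leq_trans; apply; apply: leq_addl.
case: c c0 cn {cp} => j x /= j0 jn.
apply: (allpairs_f (fun j x => (j, x))); first by rewrite mem_iota; lia.
by case: x.
Qed.

Definition C (P : pred (seq cint)) : fps := fun u v n =>
  count (fun p => [&& admissible p, psize p == n, pweight_u p == u,
                      pweight_v p == v & P p]) (cands n).

Lemma Gser_C kx : Gser kx = C (fun p => first_le p kx).
Proof. by []. Qed.

Lemma C_ext P Q : (forall p, admissible p -> P p = Q p) -> C P = C Q.
Proof.
move=> H; apply: functional_extensionality => u; apply: functional_extensionality => v.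
apply: functional_extensionality => n; apply: eq_count => p.
by case A: (admissible p) => //=; rewrite H.
Qed.

Lemma count_split2 (T : Type) (a b : pred T) s :
  count a s = count (fun x => a x && b x) s + count (fun x => a x && ~~ b x) s.
Proof. by elim: s => //= x s ->; case: (a x); case: (b x) => /=; lia. Qed.

Lemma C_split P A : C P = fps_add (C (fun p => P p && A p)) (C (fun p => P p && ~~ A p)).
Proof.
apply: functional_extensionality => u; apply: functional_extensionality => v.
apply: functional_extensionality => n; rewrite /fps_add /C.
rewrite (count_split2 _ _ A); congr addn; apply: eq_count => p /=;
by rewrite -!andbA.
Qed.

Definition hc (K : cint) (p : seq cint) : bool :=
  if p is m :: _ then m.1 + Adiff K m <= K.1 else true.

Lemma adm_cons K p : admissible (K :: p) =
  [&& valid_cint K, ~~ is_1ab K && ~~ is_1b2 K, hc K p & admissible p].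
Proof.
rewrite /admissible /=.
case: p => [|m p] /=; first by rewrite !andbT.
by case: (valid_cint K); case: (~~ is_1ab K && ~~ is_1b2 K); case: (_ <= _);
   rewrite /= ?andbF.
Qed.

Lemma valid_pos c : valid_cint c -> 0 < c.1.
Proof. by case: c => [[|k] []] //=; rewrite andbF. Qed.

Lemma adm_pos p : admissible p -> all (fun c => 0 < c.1) p.
Proof.
case/andP => /andP [Hv _] _; apply/allP => c cp; apply: valid_pos.
exact: (allP Hv).
Qed.

Lemma C_cons K Q : valid_cint K -> ~~ is_1ab K -> ~~ is_1b2 K ->
  C (fun p => (ohead p == Some K) && Q (behead p)) =
  fps_mon (wt_u K) (wt_v K) K.1 (C (fun p => hc K p && Q p)).
Proof.
move=> vK e1 e2.
apply: functional_extensionality => u; apply: functional_extensionality => v.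
apply: functional_extensionality => n; rewrite /fps_mon /C.
case: ifP => [/and3P [hu hv hn] | H].
  set L := (fun p => _).
  transitivity (count L [seq K :: p | p <- cands (n - K.1)]).
    apply: count_uniq_eq; first exact: cands_uniq.
      rewrite map_inj_uniq ?cands_uniq //; by move=> x y [].
    move=> [|c p]; rewrite /L; first by rewrite /= !andbF.
    case/and5P => adm /eqP sz _ _ /andP [/eqP [cK] _].
    rewrite in_cands ?adm_pos //; subst c.
    rewrite mem_map; last by move=> x y [].
    rewrite in_cands //.
      by move: adm; rewrite adm_cons => /and4P [_ _ _ /adm_pos].
    by rewrite -sz /psize /=; lia.
  rewrite count_map; apply: eq_count => p; rewrite /L /= adm_cons vK e1 e2 /=.
  rewrite eqxx /psize /pweight_u /pweight_v /=.
  have E : forall a x n, a <= n -> (a + x == n) = (x == n - a).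
    by move=> a x m am; apply/eqP/eqP; lia.
  rewrite E // E // E //.
  case: (hc K p) => /=; case: (admissible p) => /=; by rewrite ?andbF.
rewrite (eq_count (a2 := pred0)) ?count_pred0 // => [[|c p]] /=; first by rewrite !andbF.
apply/negP; case/and5P => _ /eqP sz /eqP wu /eqP wv /andP [/eqP [cK] _]; subst c.
move: H; rewrite -sz -wu -wv /psize /pweight_u /pweight_v /=.
by rewrite !leq_addr.
Qed.

Lemma fps_mon_add i j l F G :
  fps_mon i j l (fps_add F G) = fps_add (fps_mon i j l F) (fps_mon i j l G).
Proof.
apply: functional_extensionality => u; apply: functional_extensionality => v.
apply: functional_extensionality => n; rewrite /fps_mon /fps_add.
by case: ifP.
Qed.

Lemma fps_mon_mon i j l i' j' l' F :
  fps_mon i j l (fps_mon i' j' l' F) = fps_mon (i + i') (j + j') (l + l') F.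
Proof.
apply: functional_extensionality => u; apply: functional_extensionality => v.
apply: functional_extensionality => n; rewrite /fps_mon.
case: (leqP i u) => hu; case: (leqP j v) => hv; case: (leqP l n) => hn /=;
  try (case: ifP => // /and3P [H1 H2 H3]; exfalso; lia).
case: (leqP i' (u - i)) => h1; case: (leqP j' (v - j)) => h2;
  case: (leqP l' (n - l)) => h3 /=;
  try (case: ifP => // /and3P [H1 H2 H3]; exfalso; lia).
rewrite ifT; last by apply/and3P; split; lia.
by rewrite !subnDA.
Qed.

Lemma is_1abE c : is_1ab c = (c.2 == Cab) && (c.1 == 1).
Proof. by case: c => [[|[|k]] []]. Qed.
Lemma is_1b2E c : is_1b2 c = (c.2 == Cb2) && (c.1 == 1).
Proof. by case: c => [[|[|k]] []]. Qed.

Ltac oddcases :=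
  repeat match goal with |- context [odd ?x] =>
    let E := fresh "E" in case E: (odd x) end.

Lemma crank_inj c d : valid_cint c -> valid_cint d -> crank c = crank d -> c = d.
Proof.
case: c => m x; case: d => m' y.
case: x; case: y; rewrite /valid_cint /crank; oddcases => /=; move=> *;
  first [ (exfalso; lia) | (congr pair; lia) ].
Qed.

Lemma step1 K1 K0 K' :
  valid_cint K1 -> ~~ is_1ab K1 -> ~~ is_1b2 K1 -> crank K1 = (crank K0).+1 ->
  (forall m, valid_cint m -> ~~ is_1ab m -> ~~ is_1b2 m ->
     (m.1 + Adiff K1 m <= K1.1) = cle m K') ->
  Gser K1 = fps_add (Gser K0) (fps_mon (wt_u K1) (wt_v K1) K1.1 (Gser K')).
Proof.
move=> vK e1 e2 cK HK.
rewrite !Gser_C (C_split _ (fun p => first_le p K0)); congr fps_add.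
  apply: C_ext => [[|c p]] //= _; rewrite /cle cK andb_idl // => H.
  exact: leq_trans H (leqnSn _).
transitivity (C (fun p => (ohead p == Some K1) && true)).
  apply: C_ext => [[|c p]] //= adm; rewrite andbT /cle.
  have vc : valid_cint c by move: adm; rewrite adm_cons => /and4P [].
  case: (eqVneq c K1) => [-> | ne]; first by rewrite eqxx cK leqnn ltnn.
  have ne' : Some c != Some K1 by apply: contra ne => /eqP [->].
  rewrite (negbTE ne'); apply/negP => /andP [H1 H2].
  move/eqP: ne; apply; apply: crank_inj => //; rewrite -ltnNge in H2; lia.
rewrite (C_cons K1 (fun _ => true)) //; congr fps_mon; apply: C_ext => [[|c p]] //= adm.
move: adm; rewrite adm_cons => /and4P [vc /andP [c1 c2] _ _].
by rewrite andbT HK.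
Qed.

Lemma step2 K1 K0 K' m0 K'' i j l :
  valid_cint K1 -> ~~ is_1ab K1 -> ~~ is_1b2 K1 -> crank K1 = (crank K0).+1 ->
  (forall m, valid_cint m -> ~~ is_1ab m -> ~~ is_1b2 m ->
     (m.1 + Adiff K1 m <= K1.1) = cle m K' || (m == m0)) ->
  ~~ cle m0 K' -> valid_cint m0 -> ~~ is_1ab m0 -> ~~ is_1b2 m0 ->
  (forall m, valid_cint m -> ~~ is_1ab m -> ~~ is_1b2 m ->
     (m.1 + Adiff m0 m <= m0.1) = cle m K'') ->
  i = wt_u K1 + wt_u m0 -> j = wt_v K1 + wt_v m0 -> l = K1.1 + m0.1 ->
  Gser K1 = fps_add (Gser K0)
    (fps_add (fps_mon (wt_u K1) (wt_v K1) K1.1 (Gser K')) (fps_mon i j l (Gser K''))).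
Proof.
move=> vK e1 e2 cK HK nm0 vm0 f1 f2 Hm0 -> -> ->.
rewrite !Gser_C (C_split _ (fun p => first_le p K0)); congr fps_add.
  apply: C_ext => [[|c p]] //= _; rewrite /cle cK andb_idl // => H.
  exact: leq_trans H (leqnSn _).
transitivity (C (fun p => (ohead p == Some K1) && true)).
  apply: C_ext => [[|c p]] //= adm; rewrite andbT /cle.
  have vc : valid_cint c by move: adm; rewrite adm_cons => /and4P [].
  case: (eqVneq c K1) => [-> | ne]; first by rewrite eqxx cK leqnn ltnn.
  have ne' : Some c != Some K1 by apply: contra ne => /eqP [->].
  rewrite (negbTE ne'); apply/negP => /andP [H1 H2].
  move/eqP: ne; apply; apply: crank_inj => //; rewrite -ltnNge in H2; lia.
rewrite (C_cons K1 (fun _ => true)) // -fps_mon_mon -fps_mon_add; congr fps_mon.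
rewrite (C_split _ (fun p => first_le p K')); congr fps_add.
  apply: C_ext => [[|c p]] //= adm.
  move: adm; rewrite adm_cons => /and4P [vc /andP [c1 c2] _ _].
  by rewrite andbT HK // andb_idl // => ->.
transitivity (C (fun p => (ohead p == Some m0) && true)).
  apply: C_ext => [[|c p]] //= adm.
  move: adm; rewrite adm_cons => /and4P [vc /andP [c1 c2] _ _].
  rewrite andbT HK //.
  case: (eqVneq c m0) => [-> | ne]; first by rewrite eqxx orbT (negbTE nm0).
  have ne' : Some c != Some m0 by apply: contra ne => /eqP [->].
  by rewrite (negbTE ne') orbF andbN.
rewrite (C_cons m0 (fun _ => true)) //; congr fps_mon; apply: C_ext => [[|c p]] //= adm.
move: adm; rewrite adm_cons => /and4P [vc /andP [c1 c2] _ _].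
by rewrite andbT Hm0.
Qed.

Ltac solve_case :=
  move=> [] ? []; rewrite ?is_1abE ?is_1b2E /cle /=;
  rewrite /valid_cint /Adiff /crank /pick5 /=; oddcases; rewrite /=;
  move=> *; apply/idP/idP; lia.


Lemma ceq (x y : colour) : (x == y) = colour_eqb x y.
Proof. by []. Qed.

Ltac side :=
  first [ solve_case
        | (move=> [] ? []; rewrite ?is_1abE ?is_1b2E /cle ?xpair_eqE ?ceq /=;
           rewrite /valid_cint /Adiff /crank /pick5 /=; oddcases; rewrite /=;
           move=> *; apply/idP/idP; lia)
        | (rewrite ?is_1abE ?is_1b2E /crank /cle /valid_cint /=; oddcases; rewrite /=; lia)
        | by [] ].

Theorem lemma3p2 (k : nat) (hk : 1 <= k) :
  (Gser (k.*2.+1, Cab) =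
        fps_add (Gser (k.*2, Cb)) (fps_mon 1 1 k.*2.+1 (Gser (k.*2.-1, Ca)))) /\
      (Gser (k.*2.+1, Ca) =
        fps_add (Gser (k.*2.+1, Cab)) (fps_mon 1 0 k.*2.+1 (Gser (k.*2, Cab)))) /\
      (Gser (k.*2.+1, Cb2) =
        fps_add (Gser (k.*2.+1, Ca)) (fps_mon 0 2 k.*2.+1 (Gser (k.*2.-1, Ca)))) /\
      (Gser (k.*2.+1, Cb) =
        fps_add (Gser (k.*2.+1, Cb2)) (fps_mon 0 1 k.*2.+1 (Gser (k.*2, Ca)))) /\
      (Gser (k.*2.+2, Cab) =
        fps_add (Gser (k.*2.+1, Cb))
          (fps_add (fps_mon 1 1 k.*2.+2 (Gser (k.*2, Ca)))
                   (fps_mon 1 2 (4 * k + 2) (Gser (k.*2.-1, Ca))))) /\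
      (Gser (k.*2.+2, Ca) =
        fps_add (Gser (k.*2.+2, Cab))
          (fps_add (fps_mon 1 0 k.*2.+2 (Gser (k.*2, Ca)))
                   (fps_mon 1 1 (4 * k + 2) (Gser (k.*2.-1, Ca))))) /\
      (Gser (k.*2.+3, Ca2) =
        fps_add (Gser (k.*2.+2, Ca))
          (fps_add (fps_mon 2 0 k.*2.+3 (Gser (k.*2, Ca)))
                   (fps_mon 2 1 (4 * k + 3) (Gser (k.*2.-1, Ca))))) /\
      (Gser (k.*2.+2, Cb) =
        fps_add (Gser (k.*2.+3, Ca2)) (fps_mon 0 1 k.*2.+2 (Gser (k.*2.+1, Ca)))).
Proof.
split; first by apply: step1; side.
split; first by apply: step1; side.
split; first by apply: step1; side.
split; first by apply: step1; side.
split; first by apply: (step2 _ _ _ (k.*2, Cb)); side.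
split; first by apply: (step2 _ _ _ (k.*2, Cb)); side.
split; first by apply: (step2 _ _ _ (k.*2, Cb)); side.
by apply: step1; side.
Qed.
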